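(* Let $\beta>1$, $I_L=\bigcup_{k\in\mathbb{N}}(2k+1,2k+2)$, $I_D=\bigcup_{k\in\mathbb{N}}(2k,2k+1)$. Then: (i) $l_t(t,\beta)=\sqrt{1-\hat\sigma^2(t,\beta)}-1$ for every $t\in I_L$; (ii) $l_t(t,\beta)=\sqrt{\beta^2-\hat\sigma^2(t,\beta)}-1$ for every $t\in I_D$; (iii) $l(\cdot,\beta)$ is strictly convex on each of the open intervals composing $I_L\cup I_D$; (iv) $l(\cdot,\beta)$ is strictly decreasing on each of the open intervals composing $I_L$; (v) if $\beta\ge\sqrt{3/2}$, then $l(\cdot,\beta)$ is strictly increasing on each of the open intervals composing $I_D$; (vi) if $1<\beta<\sqrt{3/2}$, then there exists a unique $t_0>0$, characterized by $\hat\sigma(t_0,\beta)=\sqrt{\beta^2-1}$, such that $l_t(t,\beta)<0$ for all $t\in[0,t_0)\cap I_D$ and $l_t(t,\beta)>0$ for all $t\in(t_0,+\infty)\cap I_D$.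
   Context: $\mathbb{N}=\{0,1,2,\dots\}$. For $t\ge 0$ let $q(t)=\lfloor t+1\rfloor/2$ if $\lfloor t\rfloor$ is odd and $q(t)=t-\lfloor t\rfloor/2$ if $\lfloor t\rfloor$ is even, and $p(t)=t+1-q(t)$. For $\beta\ge1$ let $\hat\sigma(t,\beta)\in(0,1)$ be the unique solution $\sigma$ of $\frac{p(t)\sigma}{\sqrt{1-\sigma^2}}+\frac{q(t)\sigma}{\sqrt{\beta^2-\sigma^2}}=1$. The normalized length is $l(t,\beta)=\frac{p(t)}{\sqrt{1-\hat\sigma^2}}+\frac{\beta^2q(t)}{\sqrt{\beta^2-\hat\sigma^2}}-t-\sqrt2$, $\hat\sigma=\hat\sigma(t,\beta)$; $l_t$ denotes its partial derivative in $t$. *)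

(* Defs.v *)
From Stdlib Require Import Reals Lra ZArith ClassicalEpsilon.
From Coquelicot Require Import Coquelicot.
Open Scope R_scope.

(* floor t = Int_part t (Stdlib: Int_part x = up x - 1, the integer part). *)
Definition qf (t : R) : R :=
  if Z.odd (Int_part t) then IZR (Int_part t + 1) / 2
  else t - IZR (Int_part t) / 2.

Definition pf (t : R) : R := t + 1 - qf t.

Definition sigma_eq (t beta s : R) : Prop :=
  0 < s < 1 /\
  pf t * s / sqrt (1 - s ^ 2) + qf t * s / sqrt (beta ^ 2 - s ^ 2) = 1.

Definition sigma_hat (t beta : R) : R :=
  epsilon (inhabits 0) (fun s => sigma_eq t beta s).

Definition lnorm (t beta : R) : R :=
  let s := sigma_hat t beta in
  pf t / sqrt (1 - s ^ 2) + beta ^ 2 * qf t / sqrt (beta ^ 2 - s ^ 2)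
  - t - sqrt 2.

Definition l_t (t beta : R) : R := Derive (fun u => lnorm u beta) t.

Definition strictly_convex_on (f : R -> R) (a b : R) : Prop :=
  forall x y lam, a < x < b -> a < y < b -> x <> y -> 0 < lam < 1 ->
    f (lam * x + (1 - lam) * y) < lam * f x + (1 - lam) * f y.

Definition strictly_decreasing_on (f : R -> R) (a b : R) : Prop :=
  forall x y, a < x < b -> a < y < b -> x < y -> f y < f x.

Definition strictly_increasing_on (f : R -> R) (a b : R) : Prop :=
  forall x y, a < x < b -> a < y < b -> x < y -> f x < f y.

Definition in_IL (t : R) : Prop :=
  exists k : nat, 2 * INR k + 1 < t < 2 * INR k + 2.
Definition in_ID (t : R) : Prop :=
  exists k : nat, 2 * INR k < t < 2 * INR k + 1.

(* Main.v *)
Require Import Defs.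
From Stdlib Require Import Reals Lra Lia Psatz ZArith ClassicalEpsilon.
From Coquelicot Require Import Coquelicot.
Open Scope R_scope.

Lemma qf_base (t : R) :
  let m := Z.div2 (Int_part t) in
  2 * IZR m <= t < 2 * IZR m + 2 /\ qf t = Rmin (t - IZR m) (IZR m + 1).
Proof.
  intros m. destruct (base_Int_part t) as [H1 H2].
  pose proof (Z.div2_odd (Int_part t)) as E. fold m in E.
  unfold qf. destruct (Z.odd (Int_part t)) eqn:Eo; cbn [Z.b2z] in E;
  rewrite E in H1, H2 |- *; rewrite ?plus_IZR, ?mult_IZR in *.
  - split; [lra|]. unfold Rmin; destruct Rle_dec; lra.
  - split; [lra|]. unfold Rmin; destruct Rle_dec; lra.
Qed.

Lemma int_between (m j : Z) : IZR j - 1 < IZR m -> IZR m < IZR j + 1 -> m = j.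
Proof.
  intros H1 H2.
  assert (A : (j - 1 < m)%Z) by (apply lt_IZR; rewrite minus_IZR; lra).
  assert (B : (m < j + 1)%Z) by (apply lt_IZR; rewrite plus_IZR; lra).
  lia.
Qed.

Lemma qf_piece (j : Z) (t : R) : 2 * IZR j <= t <= 2 * IZR j + 2 ->
  qf t = Rmin (t - IZR j) (IZR j + 1).
Proof.
  intros Ht. destruct (qf_base t) as [[H1 H2] ->].
  set (m := Z.div2 (Int_part t)) in *.
  destruct (Req_dec t (2 * IZR j + 2)) as [Ee|Ne].
  - assert (m = (j+1)%Z) by (apply int_between; rewrite plus_IZR; lra).
    rewrite H, plus_IZR. unfold Rmin; repeat destruct Rle_dec; lra.
  - assert (m = j) by (apply int_between; lra). subst m; rewrite H; reflexivity.
Qed.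

Lemma m_nonneg (t : R) : 0 < t -> (0 <= Z.div2 (Int_part t))%Z.
Proof.
  intros Ht. destruct (qf_base t) as [[H1 H2] _].
  apply le_IZR. set (m := Z.div2 (Int_part t)) in *.
  assert (IZR (-1) < IZR m) by (simpl; lra).
  apply lt_IZR in H. apply IZR_le. lia.
Qed.

Lemma pq_bounds (t : R) : 0 < t -> 1 <= pf t /\ 0 <= qf t.
Proof.
  intros Ht. pose proof (m_nonneg t Ht) as M. apply IZR_le in M.
  destruct (qf_base t) as [[H1 H2] E]. unfold pf. rewrite E.
  unfold Rmin; destruct Rle_dec; simpl in *; lra.
Qed.

Lemma pq_mono (t t' : R) : 0 < t -> t <= t' -> qf t <= qf t' /\ pf t <= pf t'.
Proof.
  intros Ht Htt. unfold pf.
  destruct (qf_base t) as [[H1 H2] E]. destruct (qf_base t') as [[H1' H2'] E'].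
  rewrite E, E'.
  set (m := Z.div2 (Int_part t)) in *. set (m' := Z.div2 (Int_part t')) in *.
  destruct (Z.lt_total m m') as [L|[L|L]].
  - assert (IZR m + 1 <= IZR m') by (rewrite <- plus_IZR; apply IZR_le; lia).
    unfold Rmin; repeat destruct Rle_dec; lra.
  - rewrite L. unfold Rmin; repeat destruct Rle_dec; lra.
  - assert (IZR m' + 1 <= IZR m) by (rewrite <- plus_IZR; apply IZR_le; lia).
    lra.
Qed.

Lemma piece_L (k : nat) t : 2 * INR k + 1 < t < 2 * INR k + 2 ->
  qf t = INR k + 1 /\ pf t = t - INR k.
Proof.
  intros H. rewrite INR_IZR_INZ in *.
  assert (qf t = IZR (Z.of_nat k) + 1).
  { rewrite (qf_piece (Z.of_nat k)) by lra. unfold Rmin; destruct Rle_dec; lra. }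
  unfold pf; rewrite H0; split; [auto|lra].
Qed.

Lemma piece_D (k : nat) t : 2 * INR k <= t <= 2 * INR k + 1 ->
  qf t = t - INR k /\ pf t = INR k + 1.
Proof.
  intros H. rewrite INR_IZR_INZ in *.
  assert (qf t = t - IZR (Z.of_nat k)).
  { rewrite (qf_piece (Z.of_nat k)) by lra. unfold Rmin; destruct Rle_dec; lra. }
  unfold pf; rewrite H0; split; [auto|lra].
Qed.

Lemma piece_L' (k : nat) t : 2 * INR k + 1 <= t <= 2 * INR k + 2 ->
  qf t = INR k + 1 /\ pf t = t - INR k.
Proof.
  intros H. rewrite INR_IZR_INZ in *.
  assert (qf t = IZR (Z.of_nat k) + 1).
  { rewrite (qf_piece (Z.of_nat k)) by lra. unfold Rmin; destruct Rle_dec; lra. }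
  unfold pf; rewrite H0; split; [auto|lra].
Qed.

Definition Hs (beta P Q x : R) := P * x / sqrt (1 - x ^ 2) + Q * x / sqrt (beta ^ 2 - x ^ 2).

Lemma sqrt_pos_c (c x : R) : 1 <= c -> 0 <= x < 1 -> 0 < sqrt (c - x ^ 2).
Proof. intros Hc Hx. apply sqrt_lt_R0. nra. Qed.

Lemma inv_mono (c x y : R) : 1 <= c -> 0 <= x -> x <= y -> y < 1 ->
  / sqrt (c - x ^ 2) <= / sqrt (c - y ^ 2).
Proof.
  intros Hc Hx Hxy Hy. apply Rinv_le_contravar. apply sqrt_pos_c; lra.
  apply sqrt_le_1_alt. nra.
Qed.

Lemma inv_ge1 (x : R) : 0 <= x < 1 -> 1 <= / sqrt (1 - x ^ 2).
Proof.
  intros Hx. assert (sqrt (1 - x^2) <= sqrt 1) by (apply sqrt_le_1_alt; nra).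
  rewrite sqrt_1 in H. rewrite <- Rinv_1 at 1. apply Rinv_le_contravar; auto.
  apply sqrt_pos_c; lra.
Qed.

Lemma MH (beta P Q x y : R) : 1 < beta -> 0 < x -> x <= y -> y < 1 -> 0 <= P -> 0 <= Q ->
  Hs beta P Q y - Hs beta P Q x >= P * (y - x).
Proof.
  intros hb Hx Hxy Hy HP HQ. unfold Hs, Rdiv.
  assert (1 <= beta ^ 2) by nra.
  pose proof (inv_mono 1 x y ltac:(lra) ltac:(lra) Hxy Hy) as I1.
  pose proof (inv_mono (beta^2) x y H ltac:(lra) Hxy Hy) as I2.
  pose proof (inv_ge1 x ltac:(lra)) as G1.
  assert (0 < / sqrt (beta ^ 2 - x ^ 2)) by (apply Rinv_0_lt_compat, sqrt_pos_c; lra).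
  set (a := / sqrt (1 - x ^ 2)) in *. set (b := / sqrt (1 - y ^ 2)) in *.
  set (c := / sqrt (beta^2 - x ^ 2)) in *. set (d := / sqrt (beta^2 - y ^ 2)) in *.
  assert (E1 : y * b - x * a >= y - x) by nra.
  assert (E2 : y * d - x * c >= 0) by nra.
  nra.
Qed.

Lemma Hs_strict (beta P Q x y : R) : 1 < beta -> 0 < x -> 0 < y -> x < 1 -> y < 1 -> 1 <= P -> 0 <= Q ->
  Hs beta P Q x = Hs beta P Q y -> x = y.
Proof.
  intros hb Hx Hy' Hx' Hy HP HQ E.
  destruct (Rtotal_order x y) as [L|[L|L]]; auto.
  - pose proof (MH beta P Q x y hb Hx ltac:(lra) Hy ltac:(lra) HQ). nra.
  - pose proof (MH beta P Q y x hb ltac:(lra) ltac:(lra) ltac:(lra) ltac:(lra) HQ). nra.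
Qed.

Lemma sigma_exists (beta t : R) : 1 < beta -> 0 < t -> exists s, sigma_eq t beta s.
Proof.
  intros hb Ht. destruct (pq_bounds t Ht) as [HP HQ].
  set (P := pf t) in *. set (Q := qf t) in *.
  set (f := fun x => P * x + Q * x / sqrt (beta^2 + (beta^2 - 1) * x^2) - 1).
  assert (Hpos : forall x, 0 < beta^2 + (beta^2 - 1) * x^2).
  { intros x. assert (0 <= x^2) by (apply pow2_ge_0). assert (0 < beta^2 - 1) by nra.
    assert (0 <= (beta^2-1) * x^2) by (apply Rmult_le_pos; lra). nra. }
  assert (Hc : continuity f).
  { intros x. apply continuity_pt_filterlim. apply (@ex_derive_continuous R_AbsRing R_NormedModule f x).
    unfold f. auto_derive. split; [apply Hpos|].
    split; [|auto]. apply Rgt_not_eq, sqrt_lt_R0, Hpos. }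
  assert (F0 : f 0 < 0) by (unfold f; unfold Rdiv; lra).
  assert (F2 : 0 < f 2).
  { unfold f. assert (0 <= Q * 2 / sqrt (beta ^ 2 + (beta ^ 2 - 1) * 2 ^ 2)).
    { apply Rmult_le_pos; [lra|]. apply Rlt_le, Rinv_0_lt_compat, sqrt_lt_R0, Hpos. }
    lra. }
  destruct (IVT f 0 2 Hc ltac:(lra) F0 F2) as [z [Hz Fz]].
  assert (Hz0 : 0 < z).
  { destruct (Req_dec z 0) as [E|E]; [|lra]. rewrite E in Fz. unfold f in Fz.
    unfold Rdiv in Fz. lra. }
  set (S := sqrt (1 + z^2)). set (T := sqrt (beta^2 + (beta^2 - 1) * z^2)).
  assert (SS : S * S = 1 + z^2) by (apply sqrt_sqrt; nra).
  assert (TT : T * T = beta^2 + (beta^2 - 1) * z^2) by (apply sqrt_sqrt, Rlt_le, Hpos).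
  assert (S0 : 0 < S) by (apply sqrt_lt_R0; nra).
  assert (T0 : 0 < T) by (apply sqrt_lt_R0, Hpos).
  assert (Sz : z < S) by nra.
  exists (z / S).
  assert (E1 : sqrt (1 - (z/S)^2) = 1 / S).
  { apply sqrt_lem_1.
    - unfold Rdiv. replace ((z * / S)^2) with (z^2 * / (S*S)) by (field; lra).
      rewrite SS. replace (1 - z^2 * / (1+z^2)) with (/(1+z^2)) by (field; nra).
      apply Rlt_le, Rinv_0_lt_compat; nra.
    - unfold Rdiv. apply Rmult_le_pos; [lra|]. apply Rlt_le, Rinv_0_lt_compat; lra.
    - unfold Rdiv. replace ((z * / S)^2) with (z^2 * / (S*S)) by (field; lra).
      replace (1 * / S * (1 * / S)) with (/ (S*S)) by (field; lra). rewrite SS. field. nra. }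
  assert (E2 : sqrt (beta^2 - (z/S)^2) = T / S).
  { apply sqrt_lem_1.
    - unfold Rdiv. replace ((z * / S)^2) with (z^2 * / (S*S)) by (field; lra).
      rewrite SS. replace (beta^2 - z^2 * / (1+z^2)) with ((beta^2 + (beta^2 - 1) * z^2) * /(1+z^2)) by (field; nra).
      apply Rlt_le, Rmult_lt_0_compat; [apply Hpos|]. apply Rinv_0_lt_compat; nra.
    - unfold Rdiv. apply Rmult_le_pos; [lra|]. apply Rlt_le, Rinv_0_lt_compat; lra.
    - unfold Rdiv. replace ((z * / S)^2) with (z^2 * / (S*S)) by (field; lra).
      replace (T * / S * (T * / S)) with (T * T / (S*S)) by (field; lra). rewrite SS, TT. field. nra. }
  split.
  - split. apply Rdiv_lt_0_compat; lra.
    apply (Rmult_lt_reg_r S); [lra|]. unfold Rdiv. rewrite Rmult_assoc, Rinv_l; lra.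
  - rewrite E1, E2. unfold f in Fz. fold T in Fz. fold P Q.
    replace (P * (z / S) / (1 / S) + Q * (z / S) / (T / S)) with (P * z + Q * z / T)
      by (field; split; lra). lra.
Qed.

Lemma sigma_spec (beta t : R) : 1 < beta -> 0 < t -> sigma_eq t beta (sigma_hat t beta).
Proof.
  intros hb Ht. unfold sigma_hat. apply epsilon_spec. apply sigma_exists; auto.
Qed.

Lemma sigma_uniq (beta t s : R) : 1 < beta -> 0 < t -> sigma_eq t beta s -> sigma_hat t beta = s.
Proof.
  intros hb Ht Hs. pose proof (sigma_spec beta t hb Ht) as H.
  destruct (pq_bounds t Ht) as [HP HQ].
  destruct H as [H1 H2]. destruct Hs as [H3 H4].
  apply (Hs_strict beta (pf t) (qf t)); try lra. unfold Hs. lra.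
Qed.

Lemma lnorm_eq (beta t : R) : 1 < beta -> 0 < t ->
  let s := sigma_hat t beta in
  lnorm t beta = pf t * sqrt (1 - s^2) + qf t * sqrt (beta^2 - s^2) + s - t - sqrt 2.
Proof.
  intros hb Ht s. destruct (sigma_spec beta t hb Ht) as [[s0 s1] E]. fold s in s0, s1, E.
  unfold lnorm. fold s.
  set (u := sqrt (1 - s^2)) in *. set (v := sqrt (beta^2 - s^2)) in *.
  assert (U0 : 0 < u) by (apply sqrt_pos_c; lra).
  assert (V0 : 0 < v) by (apply sqrt_pos_c; [nra|lra]).
  assert (UU : u * u = 1 - s^2) by (apply sqrt_sqrt; nra).
  assert (VV : v * v = beta^2 - s^2) by (apply sqrt_sqrt; nra).
  set (p := pf t) in *. set (q := qf t) in *.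
  assert (A1 : p / u = p * u + s * (p * s / u)).
  { replace (p / u) with (p * (u * u + s^2) / u) by (rewrite UU; f_equal; ring). field. lra. }
  assert (A2 : beta^2 * q / v = q * v + s * (q * s / v)).
  { replace (beta^2 * q / v) with (q * (v * v + s^2) / v) by (rewrite VV; field; lra). field. lra. }
  rewrite A1, A2. replace (s * (p * s / u)) with (s * (p * s / u)) by ring. nra.
Qed.

Lemma cs_ineq (c x s : R) : 1 <= c -> 0 <= x <= 1 -> 0 <= s < 1 ->
  sqrt (c - x^2) * sqrt (c - s^2) <= c - s * x.
Proof.
  intros Hc Hx Hs. rewrite <- sqrt_mult by nra.
  assert (0 <= c - s * x) by nra.
  rewrite <- (sqrt_pow2 (c - s * x)) by auto. apply sqrt_le_1_alt.
  assert (0 <= c * (x - s)^2) by (apply Rmult_le_pos; [lra| apply pow2_ge_0]). nra.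
Qed.

Lemma lnorm_max (beta t x : R) : 1 < beta -> 0 < t -> 0 <= x <= 1 ->
  pf t * sqrt (1 - x^2) + qf t * sqrt (beta^2 - x^2) + x - t - sqrt 2 <= lnorm t beta.
Proof.
  intros hb Ht Hx. pose proof (lnorm_eq beta t hb Ht) as L. simpl in L.
  destruct (sigma_spec beta t hb Ht) as [[s0 s1] E].
  set (s := sigma_hat t beta) in *.
  destruct (pq_bounds t Ht) as [HP HQ].
  set (u := sqrt (1 - s^2)) in *. set (v := sqrt (beta^2 - s^2)) in *.
  assert (U0 : 0 < u) by (apply sqrt_pos_c; lra).
  assert (V0 : 0 < v) by (apply sqrt_pos_c; [nra|lra]).
  assert (C1 := cs_ineq 1 x s ltac:(lra) Hx ltac:(lra)). fold u in C1.
  assert (C2 := cs_ineq (beta^2) x s ltac:(nra) Hx ltac:(lra)). fold v in C2.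
  set (p := pf t) in *. set (q := qf t) in *.
  unfold lnorm. fold s u v p q.
  assert (D1 : p * sqrt (1 - x^2) <= p / u - x * (p * s / u)).
  { apply (Rmult_le_reg_r u); auto.
    replace ((p / u - x * (p * s / u)) * u) with (p * (1 - s * x)) by (field; lra).
    rewrite Rmult_assoc. apply Rmult_le_compat_l; lra. }
  assert (D2 : q * sqrt (beta^2 - x^2) <= beta^2 * q / v - x * (q * s / v)).
  { apply (Rmult_le_reg_r v); auto.
    replace ((beta^2 * q / v - x * (q * s / v)) * v) with (q * (beta^2 - s * x)) by (field; lra).
    rewrite Rmult_assoc. apply Rmult_le_compat_l; lra. }
  assert (x * (p * s / u) + x * (q * s / v) = x) by (rewrite <- Rmult_plus_distr_l, E; ring).
  lra.
Qed.

Lemma lnorm_key (beta t t' : R) : 1 < beta -> 0 < t -> 0 < t' ->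
  let s := sigma_hat t beta in
  lnorm t' beta - lnorm t beta >=
  (pf t' - pf t) * sqrt (1 - s^2) + (qf t' - qf t) * sqrt (beta^2 - s^2) - (t' - t).
Proof.
  intros hb Ht Ht' s. destruct (sigma_spec beta t hb Ht) as [[s0 s1] E]. fold s in s0, s1.
  pose proof (lnorm_max beta t' s hb Ht' ltac:(lra)).
  pose proof (lnorm_eq beta t hb Ht). cbv zeta in H0. fold s in H0. lra.
Qed.

Lemma abs_bounds (x d : R) : Rabs x <= d -> -d <= x <= d.
Proof. unfold Rabs; destruct Rcase_abs; lra. Qed.

Lemma sigma_dec (beta t t' : R) : 1 < beta -> 0 < t -> t < t' ->
  sigma_hat t' beta < sigma_hat t beta.
Proof.
  intros hb Ht Htt.
  assert (Ht' : 0 < t') by lra.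
  destruct (sigma_spec beta t hb Ht) as [[s0 s1] E].
  destruct (sigma_spec beta t' hb Ht') as [[s0' s1'] E'].
  set (s := sigma_hat t beta) in *. set (s' := sigma_hat t' beta) in *.
  destruct (pq_mono t t' Ht ltac:(lra)) as [Mq Mp].
  destruct (pq_bounds t' Ht') as [HP' HQ'].
  assert (Sum : pf t' - pf t + (qf t' - qf t) = t' - t) by (unfold pf; ring).
  set (u := sqrt (1 - s^2)) in *. set (v := sqrt (beta^2 - s^2)) in *.
  assert (U0 : 0 < u) by (apply sqrt_pos_c; lra).
  assert (V0 : 0 < v) by (apply sqrt_pos_c; [nra|lra]).
  assert (a0 : 0 < s / u) by (apply Rdiv_lt_0_compat; lra).
  assert (b0 : 0 < s / v) by (apply Rdiv_lt_0_compat; lra).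
  assert (D : Hs beta (pf t') (qf t') s - 1 = (pf t' - pf t) * (s/u) + (qf t' - qf t) * (s/v)).
  { rewrite <- E. unfold Hs. fold u v. field. lra. }
  assert (Dpos : Hs beta (pf t') (qf t') s - 1 > 0).
  { rewrite D. destruct (Req_dec (pf t') (pf t)).
    - assert (qf t' - qf t > 0) by lra. nra.
    - assert (pf t' - pf t > 0) by lra. nra. }
  destruct (Rlt_le_dec s' s) as [L|L]; auto.
  pose proof (MH beta (pf t') (qf t') s s' hb s0 L s1' ltac:(lra) HQ').
  unfold Hs at 1 in H. rewrite E' in H. nra.
Qed.

Lemma sigma_lip (beta t t' : R) : 1 < beta -> 0 < t -> 0 < t' ->
  Rabs (pf t' - pf t) <= Rabs (t' - t) -> Rabs (qf t' - qf t) <= Rabs (t' - t) ->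
  let s := sigma_hat t beta in
  Rabs (sigma_hat t' beta - s) <= Rabs (t' - t) * (s / sqrt (1 - s^2) + s / sqrt (beta^2 - s^2)).
Proof.
  intros hb Ht Ht' Bp Bq s.
  destruct (sigma_spec beta t hb Ht) as [[s0 s1] E]. fold s in s0, s1, E.
  destruct (sigma_spec beta t' hb Ht') as [[s0' s1'] E'].
  set (s' := sigma_hat t' beta) in *.
  destruct (pq_bounds t' Ht') as [HP' HQ'].
  apply abs_bounds in Bp. apply abs_bounds in Bq.
  set (d := Rabs (t' - t)) in *.
  set (u := sqrt (1 - s^2)) in *. set (v := sqrt (beta^2 - s^2)) in *.
  assert (U0 : 0 < u) by (apply sqrt_pos_c; lra).
  assert (V0 : 0 < v) by (apply sqrt_pos_c; [nra|lra]).
  assert (a0 : 0 < s / u) by (apply Rdiv_lt_0_compat; lra).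
  assert (b0 : 0 < s / v) by (apply Rdiv_lt_0_compat; lra).
  assert (D : Hs beta (pf t') (qf t') s - 1 = (pf t' - pf t) * (s/u) + (qf t' - qf t) * (s/v)).
  { rewrite <- E. unfold Hs. fold u v. field. lra. }
  assert (E'' : Hs beta (pf t') (qf t') s' = 1) by exact E'.
  destruct (Rle_dec s s') as [L|L].
  - pose proof (MH beta (pf t') (qf t') s s' hb s0 L s1' ltac:(lra) HQ').
    rewrite Rabs_pos_eq by lra. nra.
  - pose proof (MH beta (pf t') (qf t') s' s hb s0' ltac:(lra) s1 ltac:(lra) HQ').
    rewrite Rabs_left by lra. nra.
Qed.

Lemma sqrt_diff (c x y : R) : 1 <= c -> 0 <= x < 1 -> 0 <= y < 1 ->
  Rabs (sqrt (c - y^2) - sqrt (c - x^2)) <= 2 * Rabs (y - x) / sqrt (c - x^2).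
Proof.
  intros Hc Hx Hy.
  assert (V0 : 0 < sqrt (c - x^2)) by (apply sqrt_pos_c; lra).
  assert (U0 : 0 < sqrt (c - y^2)) by (apply sqrt_pos_c; lra).
  assert (VV : sqrt (c - x^2) * sqrt (c - x^2) = c - x^2) by (apply sqrt_sqrt; nra).
  assert (UU : sqrt (c - y^2) * sqrt (c - y^2) = c - y^2) by (apply sqrt_sqrt; nra).
  set (U := sqrt (c - y^2)) in *. set (V := sqrt (c - x^2)) in *.
  apply (Rmult_le_reg_r V); auto.
  replace (2 * Rabs (y - x) / V * V) with (2 * Rabs (y - x)) by (field; lra).
  assert (K : (U - V) * (U + V) = (x - y) * (x + y)) by nra.
  unfold Rabs; repeat destruct Rcase_abs; nra.
Qed.

Lemma gen_deriv (f g : R -> R) (a b x K : R) : a < x < b ->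
  (forall y z, a < y < b -> a < z < b -> f z - f y >= (z - y) * g y) ->
  (forall y, a < y < b -> Rabs (g y - g x) <= K * Rabs (y - x)) ->
  is_derive f x (g x).
Proof.
  intros Hx Sub Lip. apply is_derive_Reals. intros eps Heps.
  assert (K1 : 0 < Rabs K + 1) by (pose proof (Rabs_pos K); lra).
  set (d := Rmin (Rmin (x - a) (b - x)) (eps / (Rabs K + 1))).
  assert (d0 : 0 < d).
  { unfold d. apply Rmin_pos; [apply Rmin_pos; lra|]. apply Rdiv_lt_0_compat; lra. }
  exists (mkposreal d d0). simpl. intros h h0 Hh.
  assert (d1 : d <= x - a) by (unfold d; eapply Rle_trans; [apply Rmin_l|apply Rmin_l]).
  assert (d2 : d <= b - x) by (unfold d; eapply Rle_trans; [apply Rmin_l|apply Rmin_r]).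
  assert (d3 : d <= eps / (Rabs K + 1)) by (unfold d; apply Rmin_r).
  assert (Hy : a < x + h < b) by (revert Hh; unfold Rabs; destruct Rcase_abs; intros; lra).
  pose proof (Sub x (x+h) Hx Hy) as S1.
  pose proof (Sub (x+h) x Hy Hx) as S2.
  pose proof (Lip (x+h) Hy) as L. replace (x + h - x) with h in L by ring.
  set (D := (f (x + h) - f x) / h).
  assert (DE : f (x + h) - f x = D * h) by (unfold D; field; auto).
  replace (x + h - x) with h in S1 by ring.
  replace (x - (x + h)) with (- h) in S2 by ring.
  assert (B : Rabs (D - g x) <= Rabs (g (x + h) - g x)).
  { destruct (Rlt_le_dec 0 h) as [P|P].
    - assert (g x <= D) by nra. assert (D <= g (x+h)) by nra.
      rewrite (Rabs_pos_eq (D - g x)) by lra. rewrite Rabs_pos_eq by lra. lra.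
    - assert (h < 0) by lra.
      assert (D <= g x) by nra. assert (g (x+h) <= D) by nra.
      rewrite (Rabs_left1 (D - g x)) by lra. rewrite Rabs_left1 by lra. lra. }
  assert (KK : K * Rabs h <= Rabs K * Rabs h) by (apply Rmult_le_compat_r; [apply Rabs_pos|apply Rle_abs]).
  assert (Rabs h * (Rabs K + 1) < eps).
  { apply (Rmult_lt_compat_r (Rabs K + 1)) in Hh; auto.
    apply (Rmult_le_compat_r (Rabs K + 1)) in d3; [|lra].
    replace (eps / (Rabs K + 1) * (Rabs K + 1)) with eps in d3 by (field; lra). lra. }
  pose proof (Rabs_pos h). nra.
Qed.

Lemma gen_convex_lt (f g : R -> R) (a b x y lam : R) :
  (forall y z, a < y < b -> a < z < b -> f z - f y >= (z - y) * g y) ->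
  (forall y z, a < y < b -> a < z < b -> y < z -> g y < g z) ->
  a < x < b -> a < y < b -> x < y -> 0 < lam < 1 ->
  f (lam * x + (1 - lam) * y) < lam * f x + (1 - lam) * f y.
Proof.
  intros Sub Inc Hx Hy Hxy Hl.
  set (z := lam * x + (1 - lam) * y).
  assert (z1 : x < z) by (unfold z; nra). assert (z2 : z < y) by (unfold z; nra).
  assert (Hz : a < z < b) by lra.
  set (w := (z + y) / 2).
  assert (Hw : a < w < b) by (unfold w; lra).
  pose proof (Sub z x Hz Hx) as S1.
  pose proof (Sub w y Hw Hy) as S2.
  pose proof (Sub z w Hz Hw) as S3.
  pose proof (Inc z w Hz Hw ltac:(unfold w; lra)) as I.
  assert (T : f y - f z > (y - z) * g z).
  { assert ((y - w) * g w > (y - w) * g z) by (apply Rmult_lt_compat_l; [unfold w; lra | exact I]).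
    replace (y - z) with ((y - w) + (w - z)) by ring. nra. }
  assert (Id : lam * (z - x) = (1 - lam) * (y - z)) by (unfold z; ring).
  assert (e1 : lam * (f x - f z) >= lam * ((x - z) * g z)).
  { apply Rle_ge, Rmult_le_compat_l; lra. }
  assert (e2 : (1 - lam) * (f y - f z) > (1 - lam) * ((y - z) * g z)).
  { apply Rmult_gt_compat_l; lra. }
  assert (lam * ((x - z) * g z) + (1 - lam) * ((y - z) * g z) = 0).
  { replace (lam * ((x - z) * g z) + (1 - lam) * ((y - z) * g z))
      with ((- (lam * (z - x)) + (1 - lam) * (y - z)) * g z) by ring. rewrite Id. ring. }
  lra.
Qed.

Lemma gen_convex (f g : R -> R) (a b : R) :
  (forall y z, a < y < b -> a < z < b -> f z - f y >= (z - y) * g y) ->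
  (forall y z, a < y < b -> a < z < b -> y < z -> g y < g z) ->
  strictly_convex_on f a b.
Proof.
  intros Sub Inc x y lam Hx Hy Hne Hl.
  destruct (Rlt_le_dec x y) as [L|L].
  - apply (gen_convex_lt f g a b); auto.
  - assert (y < x) by lra.
    pose proof (gen_convex_lt f g a b y x (1 - lam) Sub Inc Hy Hx H ltac:(lra)).
    replace (lam * x + (1 - lam) * y) with ((1 - lam) * y + (1 - (1 - lam)) * x) by ring. lra.
Qed.

Lemma gen_dec (f g : R -> R) (a b : R) :
  (forall y z, a < y < b -> a < z < b -> f z - f y >= (z - y) * g y) ->
  (forall y, a < y < b -> g y < 0) -> strictly_decreasing_on f a b.
Proof.
  intros Sub N x y Hx Hy Hxy. pose proof (Sub y x Hy Hx). pose proof (N y Hy). nra.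
Qed.

Lemma gen_inc (f g : R -> R) (a b : R) :
  (forall y z, a < y < b -> a < z < b -> f z - f y >= (z - y) * g y) ->
  (forall y, a < y < b -> 0 < g y) -> strictly_increasing_on f a b.
Proof.
  intros Sub N x y Hx Hy Hxy. pose proof (Sub x y Hx Hy). pose proof (N x Hx). nra.
Qed.

Definition gL (beta t : R) := sqrt (1 - (sigma_hat t beta)^2) - 1.
Definition gD (beta t : R) := sqrt (beta^2 - (sigma_hat t beta)^2) - 1.

Lemma sig01 (beta t : R) : 1 < beta -> 0 < t -> 0 < sigma_hat t beta < 1.
Proof. intros. apply (sigma_spec beta t); auto. Qed.


Lemma subL (beta : R) (k : nat) : 1 < beta -> forall y z,
  2 * INR k + 1 < y < 2 * INR k + 2 -> 2 * INR k + 1 < z < 2 * INR k + 2 ->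
  lnorm z beta - lnorm y beta >= (z - y) * gL beta y.
Proof.
  intros hb y z Hy Hz. pose proof (pos_INR k).
  pose proof (lnorm_key beta y z hb ltac:(lra) ltac:(lra)) as K. cbv zeta in K.
  destruct (piece_L k y Hy) as [q1 p1]. destruct (piece_L k z Hz) as [q2 p2].
  rewrite q1, q2, p1, p2 in K. unfold gL. nra.
Qed.

Lemma subD (beta : R) (k : nat) : 1 < beta -> forall y z,
  2 * INR k < y < 2 * INR k + 1 -> 2 * INR k < z < 2 * INR k + 1 ->
  lnorm z beta - lnorm y beta >= (z - y) * gD beta y.
Proof.
  intros hb y z Hy Hz. pose proof (pos_INR k).
  pose proof (lnorm_key beta y z hb ltac:(lra) ltac:(lra)) as K. cbv zeta in K.
  destruct (piece_D k y ltac:(lra)) as [q1 p1]. destruct (piece_D k z ltac:(lra)) as [q2 p2].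
  rewrite q1, q2, p1, p2 in K. unfold gD. nra.
Qed.

Lemma incL (beta : R) (k : nat) : 1 < beta -> forall y z,
  2 * INR k + 1 < y < 2 * INR k + 2 -> 2 * INR k + 1 < z < 2 * INR k + 2 -> y < z ->
  gL beta y < gL beta z.
Proof.
  intros hb y z Hy Hz Hyz. pose proof (pos_INR k). unfold gL.
  pose proof (sigma_dec beta y z hb ltac:(lra) Hyz).
  pose proof (sig01 beta y hb ltac:(lra)). pose proof (sig01 beta z hb ltac:(lra)).
  apply Rplus_lt_compat_r. apply sqrt_lt_1_alt. nra.
Qed.

Lemma incD (beta : R) (k : nat) : 1 < beta -> forall y z,
  2 * INR k < y < 2 * INR k + 1 -> 2 * INR k < z < 2 * INR k + 1 -> y < z ->
  gD beta y < gD beta z.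
Proof.
  intros hb y z Hy Hz Hyz. pose proof (pos_INR k). unfold gD.
  pose proof (sigma_dec beta y z hb ltac:(lra) Hyz).
  pose proof (sig01 beta y hb ltac:(lra)). pose proof (sig01 beta z hb ltac:(lra)).
  apply Rplus_lt_compat_r. apply sqrt_lt_1_alt. nra.
Qed.

Lemma lipL (beta : R) (k : nat) (x : R) : 1 < beta -> 2 * INR k + 1 < x < 2 * INR k + 2 ->
  exists K, forall y, 2 * INR k + 1 < y < 2 * INR k + 2 ->
  Rabs (gL beta y - gL beta x) <= K * Rabs (y - x).
Proof.
  intros hb Hx. pose proof (pos_INR k).
  set (s := sigma_hat x beta).
  pose proof (sig01 beta x hb ltac:(lra)) as Sx. fold s in Sx.
  set (u := sqrt (1 - s^2)). set (v := sqrt (beta^2 - s^2)).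
  assert (U0 : 0 < u) by (apply sqrt_pos_c; lra).
  assert (V0 : 0 < v) by (apply sqrt_pos_c; [nra|lra]).
  exists (2 * (s / u + s / v) / u). intros y Hy.
  pose proof (sig01 beta y hb ltac:(lra)) as Sy.
  destruct (piece_L k y Hy) as [q1 p1]. destruct (piece_L k x Hx) as [q2 p2].
  pose proof (sigma_lip beta x y hb ltac:(lra) ltac:(lra)) as L.
  rewrite q1, q2, p1, p2 in L. cbv zeta in L. fold s u v in L.
  assert (L' : Rabs (sigma_hat y beta - s) <= Rabs (y - x) * (s / u + s / v)).
  { apply L. right; f_equal; ring. rewrite Rminus_diag, Rabs_R0. apply Rabs_pos. }
  pose proof (sqrt_diff 1 s (sigma_hat y beta) ltac:(lra) ltac:(lra) ltac:(lra)) as D.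
  fold u in D. unfold gL. fold s u.
  replace (sqrt (1 - sigma_hat y beta ^ 2) - 1 - (u - 1)) with (sqrt (1 - sigma_hat y beta ^ 2) - u) by ring.
  eapply Rle_trans; [exact D|].
  replace (2 * (s / u + s / v) / u * Rabs (y - x)) with (2 * (Rabs (y - x) * (s / u + s / v)) / u) by (field; lra).
  unfold Rdiv. apply Rmult_le_compat_r. apply Rlt_le, Rinv_0_lt_compat; auto. lra.
Qed.

Lemma lipD (beta : R) (k : nat) (x : R) : 1 < beta -> 2 * INR k < x < 2 * INR k + 1 ->
  exists K, forall y, 2 * INR k < y < 2 * INR k + 1 ->
  Rabs (gD beta y - gD beta x) <= K * Rabs (y - x).
Proof.
  intros hb Hx. pose proof (pos_INR k).
  set (s := sigma_hat x beta).
  pose proof (sig01 beta x hb ltac:(lra)) as Sx. fold s in Sx.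
  set (u := sqrt (1 - s^2)). set (v := sqrt (beta^2 - s^2)).
  assert (V0 : 0 < v) by (apply sqrt_pos_c; [nra|lra]).
  assert (U0 : 0 < u) by (apply sqrt_pos_c; lra).
  exists (2 * (s / u + s / v) / v). intros y Hy.
  pose proof (sig01 beta y hb ltac:(lra)) as Sy.
  destruct (piece_D k y ltac:(lra)) as [q1 p1]. destruct (piece_D k x ltac:(lra)) as [q2 p2].
  pose proof (sigma_lip beta x y hb ltac:(lra) ltac:(lra)) as L.
  rewrite q1, q2, p1, p2 in L. cbv zeta in L. fold s u v in L.
  assert (L' : Rabs (sigma_hat y beta - s) <= Rabs (y - x) * (s / u + s / v)).
  { apply L. rewrite Rminus_diag, Rabs_R0. apply Rabs_pos. right; f_equal; ring. }
  pose proof (sqrt_diff (beta^2) s (sigma_hat y beta) ltac:(nra) ltac:(lra) ltac:(lra)) as D.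
  fold v in D. unfold gD. fold s v.
  replace (sqrt (beta^2 - sigma_hat y beta ^ 2) - 1 - (v - 1)) with (sqrt (beta^2 - sigma_hat y beta ^ 2) - v) by ring.
  eapply Rle_trans; [exact D|].
  replace (2 * (s / u + s / v) / v * Rabs (y - x)) with (2 * (Rabs (y - x) * (s / u + s / v)) / v) by (field; lra).
  unfold Rdiv. apply Rmult_le_compat_r. apply Rlt_le, Rinv_0_lt_compat; auto. lra.
Qed.

Lemma sigma_small (beta t : R) : 1 < beta -> 0 < t -> (sigma_hat t beta)^2 < 1/2.
Proof.
  intros hb Ht. destruct (sigma_spec beta t hb Ht) as [[s0 s1] E].
  set (s := sigma_hat t beta) in *.
  destruct (pq_bounds t Ht) as [HP HQ].
  set (u := sqrt (1 - s^2)) in *. set (v := sqrt (beta^2 - s^2)) in *.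
  assert (U0 : 0 < u) by (apply sqrt_pos_c; lra).
  assert (V0 : 0 < v) by (apply sqrt_pos_c; [nra|lra]).
  destruct (Rlt_le_dec (s^2) (1/2)) as [L|L]; auto. exfalso.
  assert (us : u <= s).
  { unfold u. apply Rle_trans with (sqrt (s^2)); [apply sqrt_le_1_alt; lra|].
    rewrite sqrt_pow2; lra. }
  assert (a1 : 1 <= s / u).
  { apply (Rmult_le_reg_r u); auto. unfold Rdiv. rewrite Rmult_assoc, Rinv_l; lra. }
  assert (b0 : 0 < s / v) by (apply Rdiv_lt_0_compat; lra).
  replace (pf t * s / u) with (pf t * (s / u)) in E by (unfold Rdiv; ring).
  replace (qf t * s / v) with (qf t * (s / v)) in E by (unfold Rdiv; ring).
  assert (pf t * (s/u) >= 1) by nra.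
  assert (qf t * (s/v) >= 0) by nra.
  assert (qf t = 0) by nra.
  assert (pf t = 1) by nra.
  unfold pf in *. lra.
Qed.

Lemma search (phi : nat -> R) : phi 0%nat <= 1 ->
  forall N, phi N > 1 -> exists k, phi k <= 1 < phi (S k).
Proof.
  intros H0 N. induction N as [|N IH]; intros HN.
  - lra.
  - destruct (Rle_lt_dec (phi N) 1) as [L|L].
    + exists N. lra.
    + apply IH; lra.
Qed.

Lemma t0_exists (beta : R) : 1 < beta -> beta < sqrt (3/2) ->
  exists t0, 0 < t0 /\ sigma_hat t0 beta = sqrt (beta^2 - 1).
Proof.
  intros hb hb2.
  assert (B2 : beta^2 < 3/2).
  { assert (0 <= 3/2) by lra. pose proof (pow2_sqrt (3/2) H).
    assert (0 < sqrt (3/2)) by lra. nra. }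
  set (c := sqrt (beta^2 - 1)).
  assert (cc : c^2 = beta^2 - 1) by (apply pow2_sqrt; nra).
  assert (c0 : 0 < c) by (apply sqrt_lt_R0; nra).
  assert (vc : sqrt (beta^2 - c^2) = 1) by (rewrite cc; replace (beta^2 - (beta^2 - 1)) with 1 by ring; apply sqrt_1).
  set (w := sqrt (1 - c^2)).
  assert (w0 : 0 < w) by (apply sqrt_lt_R0; nra).
  assert (ww : w^2 = 1 - c^2) by (apply pow2_sqrt; nra).
  assert (cw : c < w) by nra.
  set (al := c / w).
  assert (al0 : 0 < al) by (apply Rdiv_lt_0_compat; lra).
  assert (al1 : al < 1).
  { apply (Rmult_lt_reg_r w); auto. unfold al, Rdiv. rewrite Rmult_assoc, Rinv_l; lra. }
  set (phi := fun k : nat => (INR k + 1) * al + INR k * c).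
  destruct (archimed_cor1 c c0) as [N [HN1 HN2]].
  assert (NP : 0 < INR N) by (apply lt_0_INR; auto).
  assert (HN : phi N > 1).
  { unfold phi. apply (Rmult_lt_compat_r (INR N)) in HN1; auto.
    rewrite Rinv_l in HN1 by lra. nra. }
  destruct (search phi ltac:(unfold phi; simpl; lra) N HN) as [k [Hk1 Hk2]].
  unfold phi in Hk1, Hk2. rewrite S_INR in Hk2.
  pose proof (pos_INR k) as kp.
  assert (cb : 0 < c < 1) by nra.
  destruct (Rle_lt_dec 1 ((INR k + 1) * al + (INR k + 1) * c)) as [A|A].
  - set (t0 := INR k + (1 - (INR k + 1) * al) / c).
    assert (T1 : 2 * INR k <= t0 <= 2 * INR k + 1).
    { unfold t0. split.
      - apply (Rplus_le_reg_l (- INR k)). replace (- INR k + 2 * INR k) with (INR k) by ring.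
        replace (- INR k + (INR k + (1 - (INR k + 1) * al) / c)) with ((1 - (INR k + 1) * al) / c) by ring.
        apply (Rmult_le_reg_r c); auto. unfold Rdiv. rewrite Rmult_assoc, Rinv_l; lra.
      - apply (Rplus_le_reg_l (- INR k)).
        replace (- INR k + (2 * INR k + 1)) with (INR k + 1) by ring.
        replace (- INR k + (INR k + (1 - (INR k + 1) * al) / c)) with ((1 - (INR k + 1) * al) / c) by ring.
        apply (Rmult_le_reg_r c); auto. unfold Rdiv. rewrite Rmult_assoc, Rinv_l; lra. }
    assert (T0 : 0 < t0).
    { destruct (Req_dec (INR k) 0) as [Hz|Hz].
      - assert (0 < (1 - (INR k + 1)*al)/c) by (rewrite Hz; apply Rdiv_lt_0_compat; lra).
        unfold t0; lra.
      - lra. }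
    exists t0. split; auto. apply sigma_uniq; auto.
    destruct (piece_D k t0 T1) as [q1 p1].
    split; [lra|]. rewrite q1, p1, vc. fold w.
    unfold t0, al. field. split; lra.
  - set (t0 := INR k + (1 - (INR k + 1) * c) / al).
    assert (T1 : 2 * INR k + 1 <= t0 <= 2 * INR k + 2).
    { unfold t0. split.
      - apply (Rplus_le_reg_l (- INR k)). replace (- INR k + (2 * INR k + 1)) with (INR k + 1) by ring.
        replace (- INR k + (INR k + (1 - (INR k + 1) * c) / al)) with ((1 - (INR k + 1) * c) / al) by ring.
        apply (Rmult_le_reg_r al); auto. unfold Rdiv. rewrite Rmult_assoc, Rinv_l; lra.
      - apply (Rplus_le_reg_l (- INR k)).
        replace (- INR k + (2 * INR k + 2)) with (INR k + 2) by ring.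
        replace (- INR k + (INR k + (1 - (INR k + 1) * c) / al)) with ((1 - (INR k + 1) * c) / al) by ring.
        apply (Rmult_le_reg_r al); auto. unfold Rdiv. rewrite Rmult_assoc, Rinv_l; lra. }
    exists t0. split; [lra|]. apply sigma_uniq; [auto|lra|].
    destruct (piece_L' k t0 T1) as [q1 p1].
    split; [lra|]. rewrite q1, p1, vc. fold w.
    unfold t0, al. field. split; lra.
Qed.

Lemma derL (beta t : R) : 1 < beta -> in_IL t ->
  is_derive (fun u => lnorm u beta) t (sqrt (1 - (sigma_hat t beta) ^ 2) - 1).
Proof.
  intros hb [k Hk]. destruct (lipL beta k t hb Hk) as [K HK].
  apply (gen_deriv (fun u => lnorm u beta) (gL beta) (2 * INR k + 1) (2 * INR k + 2) t K Hk).
  - apply subL; auto.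
  - exact HK.
Qed.

Lemma derD (beta t : R) : 1 < beta -> in_ID t ->
  is_derive (fun u => lnorm u beta) t (sqrt (beta ^ 2 - (sigma_hat t beta) ^ 2) - 1).
Proof.
  intros hb [k Hk]. destruct (lipD beta k t hb Hk) as [K HK].
  apply (gen_deriv (fun u => lnorm u beta) (gD beta) (2 * INR k) (2 * INR k + 1) t K Hk).
  - apply subD; auto.
  - exact HK.
Qed.

Theorem lemma3p4 (beta : R) (hb : 1 < beta) :
  (* (i) *)
  (forall t, in_IL t ->
     is_derive (fun u => lnorm u beta) t (sqrt (1 - (sigma_hat t beta) ^ 2) - 1)) /\
  (* (ii) *)
  (forall t, in_ID t ->
     is_derive (fun u => lnorm u beta) t (sqrt (beta ^ 2 - (sigma_hat t beta) ^ 2) - 1)) /\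
  (* (iii) *)
  (forall k : nat,
     strictly_convex_on (fun u => lnorm u beta) (2 * INR k + 1) (2 * INR k + 2) /\
     strictly_convex_on (fun u => lnorm u beta) (2 * INR k) (2 * INR k + 1)) /\
  (* (iv) *)
  (forall k : nat,
     strictly_decreasing_on (fun u => lnorm u beta) (2 * INR k + 1) (2 * INR k + 2)) /\
  (* (v) *)
  (sqrt (3 / 2) <= beta -> forall k : nat,
     strictly_increasing_on (fun u => lnorm u beta) (2 * INR k) (2 * INR k + 1)) /\
  (* (vi) *)
  (beta < sqrt (3 / 2) ->
     exists t0, 0 < t0 /\ sigma_hat t0 beta = sqrt (beta ^ 2 - 1) /\
       (forall t1, 0 < t1 -> sigma_hat t1 beta = sqrt (beta ^ 2 - 1) -> t1 = t0) /\
       (forall t, 0 <= t < t0 -> in_ID t -> l_t t beta < 0) /\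
       (forall t, t0 < t -> in_ID t -> l_t t beta > 0)).
Proof.
  split; [intros; apply derL; auto|].
  split; [intros; apply derD; auto|].
  split.
  { intros k. split.
    - apply (gen_convex _ (gL beta)); [apply subL; auto | apply incL; auto].
    - apply (gen_convex _ (gD beta)); [apply subD; auto | apply incD; auto]. }
  split.
  { intros k. apply (gen_dec _ (gL beta)); [apply subL; auto|].
    intros y Hy. pose proof (pos_INR k). pose proof (sig01 beta y hb ltac:(lra)).
    unfold gL. assert (sqrt (1 - sigma_hat y beta ^ 2) < sqrt 1) by (apply sqrt_lt_1_alt; nra).
    rewrite sqrt_1 in H1. lra. }
  split.
  { intros hb2 k. apply (gen_inc _ (gD beta)); [apply subD; auto|].
    intros y Hy. pose proof (pos_INR k). pose proof (sigma_small beta y hb ltac:(lra)).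
    assert (B2 : 3/2 <= beta^2).
    { assert (0 <= 3/2) by lra. pose proof (pow2_sqrt (3/2) H1).
      pose proof (sqrt_pos (3/2)). nra. }
    unfold gD. assert (sqrt 1 < sqrt (beta ^ 2 - sigma_hat y beta ^ 2)) by (apply sqrt_lt_1_alt; nra).
    rewrite sqrt_1 in H1. lra. }
  intros hb2. destruct (t0_exists beta hb hb2) as [t0 [T0 E0]].
  set (c := sqrt (beta^2 - 1)) in *.
  assert (cc : c^2 = beta^2 - 1) by (apply pow2_sqrt; nra).
  assert (c0 : 0 < c) by (apply sqrt_lt_R0; nra).
  exists t0. split; [auto|]. split; [auto|]. split.
  { intros t1 Ht1 E1. destruct (Rtotal_order t1 t0) as [L|[L|L]]; auto.
    - pose proof (sigma_dec beta t1 t0 hb Ht1 L). lra.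
    - pose proof (sigma_dec beta t0 t1 hb T0 L). lra. }
  split.
  - intros t Ht HD. destruct HD as [k Hk]. pose proof (pos_INR k).
    assert (Dq : l_t t beta = sqrt (beta ^ 2 - (sigma_hat t beta) ^ 2) - 1).
    { unfold l_t. apply is_derive_unique. apply derD; auto. exists k; auto. }
    rewrite Dq.
    pose proof (sigma_dec beta t t0 hb ltac:(lra) ltac:(lra)).
    pose proof (sig01 beta t0 hb T0). pose proof (sig01 beta t hb ltac:(lra)).
    assert (sqrt (beta ^ 2 - sigma_hat t beta ^ 2) < sqrt 1) by (apply sqrt_lt_1_alt; nra).
    rewrite sqrt_1 in H3. lra.
  - intros t Ht HD. destruct HD as [k Hk]. pose proof (pos_INR k).
    assert (Dq : l_t t beta = sqrt (beta ^ 2 - (sigma_hat t beta) ^ 2) - 1).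
    { unfold l_t. apply is_derive_unique. apply derD; auto. exists k; auto. }
    rewrite Dq.
    pose proof (sigma_dec beta t0 t hb T0 Ht).
    pose proof (sig01 beta t0 hb T0). pose proof (sig01 beta t hb ltac:(lra)).
    assert (sqrt 1 < sqrt (beta ^ 2 - sigma_hat t beta ^ 2)) by (apply sqrt_lt_1_alt; nra).
    rewrite sqrt_1 in H3. lra.
Qed.
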